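(* Let $k\ge1$ and $X,Y\in\mathrm{Mat}_k(\mathbb{Z}_{\geq 1})$. Then $\mathrm{size}_2(X)+\mathrm{size}_2(Y)\le\mathrm{size}_2(X\otimes Y)+2k^2-1$, where $\otimes$ is max-times matrix multiplication.
   Context: Max-times product: $(X\otimes Y)_{ij}=\max_{1\le l\le k}(x_{il}\cdot y_{lj})$. For an integer $a\ge1$, $\mathrm{size}_2(a)=\lfloor\log_2 a\rfloor+1$. For a $k\times k$ matrix $A$, $\mathrm{size}_2(A)=\sum_{i=1}^k\sum_{j=1}^k\mathrm{size}_2(a_{ij})+k^2-1$. *)

(* Defs.v *)
From mathcomp Require Import all_boot all_order all_algebra.
Set Implicit Arguments. Unset Strict Implicit. Unset Printing Implicit Defensive.

(* size_2(a) = floor(log2 a) + 1 for a >= 1; trunc_log 2 a is floor(log2 a). *)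
Definition size2 (a : nat) : nat := trunc_log 2 a + 1.

Definition size2mx (k : nat) (A : 'M[nat]_k) : nat :=
  \sum_(i < k) \sum_(j < k) size2 (A i j) + (k ^ 2 - 1).

Definition maxtimes (k : nat) (X Y : 'M[nat]_k) : 'M[nat]_k :=
  \matrix_(i < k, j < k) \max_(l < k) (X i l * Y l j).

(* Main.v *)
Require Import Defs.
From mathcomp Require Import all_boot all_order all_algebra.
From mathcomp Require Import zify.
From Stdlib Require Import Lia.

Lemma tlogM {a b} : 0 < a -> 0 < b ->
  (trunc_log 2 a + trunc_log 2 b <= trunc_log 2 (a * b))%N.
Proof.
move=> a0 b0; apply: trunc_log_max => //.
by rewrite expnD leq_mul // trunc_logP.
Qed.

Lemma size2mxE k (A : 'M[nat]_k) :
  size2mx A = \sum_(i < k) \sum_(j < k) trunc_log 2 (A i j) + k * k + (k ^ 2 - 1).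
Proof.
rewrite /size2mx /size2.
congr (_ + _).
under eq_bigr => i _ do rewrite big_split /= sum_nat_const card_ord muln1.
by rewrite big_split /= sum_nat_const card_ord.
Qed.

Theorem mainTheorem14 (k : nat) (X Y : 'M[nat]_k) :
  1 <= k ->
  (forall i j, 1 <= X i j) -> (forall i j, 1 <= Y i j) ->
  size2mx X + size2mx Y <= size2mx (maxtimes X Y) + 2 * k ^ 2 - 1.
Proof.
case: k X Y => [//|k] X Y _ HX HY.
rewrite !size2mxE.
set L := fun (A : 'M[nat]_k.+1) => \sum_(i < k.+1) \sum_(j < k.+1) trunc_log 2 (A i j).
suff key : L X + L Y <= L (maxtimes X Y).
  rewrite /L in key.
  have e : k.+1 ^ 2 = k.+1 * k.+1 by rewrite expnS expn1.
  rewrite e; lia.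
have eX : L X = \sum_(i < k.+1) \sum_(j < k.+1) trunc_log 2 (X i (i + j)%R).
  apply: eq_bigr => i _.
  by rewrite (reindex_inj (h := fun j : 'I_k.+1 => (i + j)%R)) //; exact: GRing.addrI.
have eY : L Y = \sum_(i < k.+1) \sum_(j < k.+1) trunc_log 2 (Y (i + j)%R j).
  rewrite /L exchange_big [RHS]exchange_big /=.
  apply: eq_bigr => j _.
  by rewrite (reindex_inj (h := fun i : 'I_k.+1 => (i + j)%R)) //; exact: GRing.addIr.
rewrite eX eY -big_split /=; apply: leq_sum => i _.
rewrite -big_split /=; apply: leq_sum => j _.
rewrite mxE; move: (tlogM (HX i (i+j)%R) (HY (i+j)%R j)) => H; apply: (leq_trans H).
apply: leq_trunc_log.
exact: (@leq_bigmax _ (fun l : 'I_k.+1 => X i l * Y l j) (i + j)%R).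
Qed.
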